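(* Let $0<q<1$ and let $n$ and $s_1,\dots,s_n$ be positive integers such that $s_j>1$ for some $j$. Then \[ \sum_{j=1}^n \zeta\big[s_j+1,s_{j+1},\dots,s_n,s_1,\dots,s_{j-1}\big] = \sum_{j=1}^n \sum_{k=0}^{s_j-2}\zeta\big[s_j-k,s_{j+1},\dots,s_n,s_1,\dots,s_{j-1},k+1\big], \] where the inner sum on the right is zero when $s_j=1$.
   Context: Fix $0<q<1$. For real $x$, $[x]_q := (1-q^x)/(1-q)$. For positive integers $t_1,\dots,t_N$ with $t_1>1$, $\zeta[t_1,\dots,t_N] := \sum_{k_1>\cdots>k_N>0}\prod_{j=1}^N q^{(t_j-1)k_j}/[k_j]_q^{t_j}$ (sum over positive integers). *)

(* Defs.v *)
From Stdlib Require Import Reals Lra Lia List.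
From Coquelicot Require Import Coquelicot.
Import ListNotations.
Open Scope R_scope.

Definition qint (q x : R) : R := (1 - Rpower q x) / (1 - q).

Definition qterm (q : R) (t k : nat) : R :=
  q ^ ((t - 1) * k) / (qint q (INR k)) ^ t.

(* Finite sum over M >= k_1 > k_2 > ... > k_N > 0. *)
Fixpoint qzeta_trunc (q : R) (M : nat) (ts : list nat) : R :=
  match ts with
  | [] => 1
  | t :: ts' =>
      fold_right Rplus 0
        (map (fun k => qterm q t k * qzeta_trunc q (k - 1)%nat ts') (seq 1 M))
  end.

(* zeta[t_1,...,t_N] := sum_{k_1 > ... > k_N > 0} prod_j q^((t_j-1)k_j)/[k_j]_q^{t_j},
   defined as the limit of the truncations k_1 <= M (nonnegative terms). *)
Definition qzeta (q : R) (ts : list nat) : R :=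
  real (Lim_seq (fun M => qzeta_trunc q M ts)).

Definition fsum (m : nat) (f : nat -> R) : R :=
  fold_right Rplus 0 (map f (seq 0 m)).

(* Main.v *)
Require Import Defs.
From Stdlib Require Import Reals Lra Lia List Arith.
From Coquelicot Require Import Coquelicot.
Import ListNotations.
Open Scope R_scope.

Definition sm (f : nat -> R) (a n : nat) : R := fold_right Rplus 0 (map f (seq a n)).

Lemma sm_0 f a : sm f a 0 = 0. Proof. reflexivity. Qed.
Lemma sm_S_l f a n : sm f a (S n) = f a + sm f (S a) n. Proof. reflexivity. Qed.
Lemma sm_S_r f a n : sm f a (S n) = sm f a n + f (a + n)%nat.
Proof.
  unfold sm. rewrite seq_S, map_app, fold_right_app. simpl.
  generalize (f (a+n)%nat). induction (map f (seq a n)); intros; simpl; [lra|].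
  rewrite IHl. lra.
Qed.
Lemma sm_ext f g a n : (forall i, (a <= i < a + n)%nat -> f i = g i) -> sm f a n = sm g a n.
Proof.
  revert a; induction n; intros a H; [reflexivity|].
  rewrite !sm_S_l. rewrite H by lia. rewrite IHn; [reflexivity|]. intros; apply H; lia.
Qed.
Lemma sm_plus f g a n : sm (fun i => f i + g i) a n = sm f a n + sm g a n.
Proof. revert a; induction n; intros; [unfold sm; simpl; lra|]. rewrite !sm_S_l, IHn. lra. Qed.
Lemma sm_scal c f a n : sm (fun i => c * f i) a n = c * sm f a n.
Proof. revert a; induction n; intros; [unfold sm; simpl; lra|]. rewrite !sm_S_l, IHn. lra. Qed.
Lemma sm_minus f g a n : sm (fun i => f i - g i) a n = sm f a n - sm g a n.
Proof. revert a; induction n; intros; [unfold sm; simpl; lra|]. rewrite !sm_S_l, IHn. lra. Qed.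
Lemma sm_zero a n : sm (fun _ => 0) a n = 0.
Proof. revert a; induction n; intros; [reflexivity|]. rewrite sm_S_l, IHn. lra. Qed.
Lemma sm_le f g a n : (forall i, (a <= i < a + n)%nat -> f i <= g i) -> sm f a n <= sm g a n.
Proof.
  revert a; induction n; intros a H; [unfold sm; simpl; lra|].
  rewrite !sm_S_l. apply Rplus_le_compat; [apply H; lia|]. apply IHn; intros; apply H; lia.
Qed.
Lemma sm_nonneg f a n : (forall i, (a <= i < a + n)%nat -> 0 <= f i) -> 0 <= sm f a n.
Proof. intros H. rewrite <- (sm_zero a n). apply sm_le. auto. Qed.
Lemma sm_bound f a n A : (forall i, (a <= i < a + n)%nat -> f i <= A) -> sm f a n <= INR n * A.
Proof.
  revert a; induction n; intros a H; [unfold sm; simpl; lra|].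
  rewrite sm_S_l, S_INR. assert (f a <= A) by (apply H; lia).
  assert (sm f (S a) n <= INR n * A) by (apply IHn; intros; apply H; lia). lra.
Qed.
Lemma sm_swap (F : nat -> nat -> R) a n b m :
  sm (fun i => sm (fun k => F i k) b m) a n = sm (fun k => sm (fun i => F i k) a n) b m.
Proof.
  revert a; induction n; intros a.
  - rewrite sm_0. symmetry. apply sm_zero.
  - rewrite sm_S_l, IHn. rewrite <- sm_plus. apply sm_ext. intros. rewrite sm_S_l. reflexivity.
Qed.
Lemma sm_shift f a n : sm f (S a) n = sm (fun i => f (S i)) a n.
Proof. revert a; induction n; intros; [reflexivity|]. rewrite !sm_S_l, IHn. reflexivity. Qed.
Lemma sm_tele (H : nat -> R) n : sm (fun c => H (S c) - H c) 0 n = H n - H 0%nat.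
Proof. induction n; [unfold sm; simpl; lra|]. rewrite sm_S_r, IHn. simpl. lra. Qed.
Lemma sm_Reals f n : sm f 0 (S n) = sum_f_R0 f n.
Proof. induction n; [unfold sm; simpl; lra|]. rewrite sm_S_r, IHn. simpl. reflexivity. Qed.

Lemma sm_one f a : sm f a 1 = f a. Proof. unfold sm; simpl; lra. Qed.
Lemma sm_tri (F : nat -> nat -> R) N :
  sm (fun m => sm (fun k => F m k) 1 (m - 1)) 1 N
  = sm (fun k => sm (fun m => F m k) (k + 1) (N - k)) 1 (N - 1).
Proof.
  induction N.
  - reflexivity.
  - rewrite sm_S_r, IHN. replace (1 + N)%nat with (S N) by lia.
    replace (S N - 1)%nat with N by lia.
    destruct N.
    + unfold sm; simpl; lra.
    + replace (S N - 1)%nat with N by lia. rewrite (sm_S_r _ 1 N).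
      replace (1 + N)%nat with (S N) by lia.
      replace (S N - S N)%nat with 0%nat by lia.
      replace (S N + 1)%nat with (S (S N)) by lia.
      replace (sm (fun k => F (S (S N)) k) 1 (S N)) with
        (sm (fun k => F (S (S N)) k) 1 N + F (S (S N)) (S N)) by (rewrite sm_S_r; f_equal; f_equal; lia).
      assert (Heq : sm (fun k => sm (fun m => F m k) (k + 1) (S (S N) - k)) 1 N =
        sm (fun k => sm (fun m => F m k) (k + 1) (S N - k)) 1 N + sm (fun k => F (S (S N)) k) 1 N).
      { rewrite <- sm_plus. apply sm_ext. intros i Hi.
        replace (S (S N) - i)%nat with (S (S N - i)) by lia. rewrite sm_S_r. f_equal. f_equal. lia. }
      rewrite (sm_S_r _ 1 N), Heq. replace (1 + N)%nat with (S N) by lia.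
      replace (S (S N) - S N)%nat with 1%nat by lia. rewrite sm_one.
      replace (S N + 1)%nat with (S (S N)) by lia. lra.
Qed.

Definition hq q m := q ^ m / qint q (INR m).

Section Q.
Variable q : R.
Hypothesis hq0 : 0 < q.
Hypothesis hq1 : q < 1.

Lemma qint_eq m : qint q (INR m) = (1 - q ^ m) / (1 - q).
Proof. unfold qint. rewrite Rpower_pow by lra. reflexivity. Qed.

Lemma pow_pos' m : 0 < q ^ m. Proof. apply pow_lt; lra. Qed.
Lemma pow_le1 m : q ^ m <= 1.
Proof. induction m; simpl; [lra|]. assert (0 < q^m) by apply pow_pos'. nra. Qed.
Lemma pow_le_add a b : q ^ (a + b) <= q ^ a.
Proof. rewrite pow_add. assert (0 < q^a) by apply pow_pos'. assert (q^b <= 1) by apply pow_le1. nra. Qed.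
Lemma pow_mono a b : (a <= b)%nat -> q ^ b <= q ^ a.
Proof. intros H. replace b with (a + (b - a))%nat by lia. apply pow_le_add. Qed.

Lemma qint_ge1 m : (1 <= m)%nat -> 1 <= qint q (INR m).
Proof.
  intros H. rewrite qint_eq. assert (q ^ m <= q ^ 1) by (apply pow_mono; lia).
  simpl in H0. apply Rcomplements.Rle_div_r; lra.
Qed.

Lemma qterm_nonneg t m : (1 <= m)%nat -> 0 <= qterm q t m.
Proof.
  intros H. unfold qterm. assert (1 <= qint q (INR m)) by (apply qint_ge1; auto).
  apply Rmult_le_pos. apply pow_le; lra. left; apply Rinv_0_lt_compat, pow_lt; lra.
Qed.

Lemma qterm_le_pow t m : (1 <= m)%nat -> qterm q t m <= q ^ ((t - 1) * m).
Proof.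
  intros H. unfold qterm. assert (1 <= qint q (INR m)) by (apply qint_ge1; auto).
  assert (1 <= qint q (INR m) ^ t) by (apply pow_R1_Rle; auto).
  assert (0 < q ^ ((t-1)*m)) by apply pow_pos'.
  unfold Rdiv. rewrite <- (Rmult_1_r (q ^ ((t-1)*m))) at 2. apply Rmult_le_compat_l; [lra|].
  rewrite <- Rinv_1. apply Rinv_le_contravar; lra.
Qed.

Lemma qterm_le1 t m : (1 <= m)%nat -> qterm q t m <= 1.
Proof. intros H. eapply Rle_trans; [apply qterm_le_pow; auto|apply pow_le1]. Qed.

Lemma qterm_le_q t m : (1 <= m)%nat -> (2 <= t)%nat -> qterm q t m <= q ^ m.
Proof.
  intros H H2. eapply Rle_trans; [apply qterm_le_pow; auto|]. apply pow_mono. nia.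
Qed.

Lemma hq_nonneg m : 0 <= hq q m.
Proof.
  unfold hq. destruct m.
  - rewrite qint_eq. simpl. replace ((1-1)/(1-q)) with 0 by (field; lra). rewrite Rdiv_0_r. lra.
  - assert (1 <= qint q (INR (S m))) by (apply qint_ge1; lia).
    apply Rmult_le_pos. apply pow_le; lra. left; apply Rinv_0_lt_compat; lra.
Qed.

Lemma hq_le_pow m : hq q m <= q ^ m.
Proof.
  unfold hq. destruct m.
  - rewrite qint_eq. simpl. replace ((1-1)/(1-q)) with 0 by (field; lra). rewrite Rdiv_0_r. lra.
  - assert (1 <= qint q (INR (S m))) by (apply qint_ge1; lia).
    assert (0 < q ^ (S m)) by apply pow_pos'.
    unfold Rdiv. rewrite <- (Rmult_1_r (q ^ (S m))) at 2. apply Rmult_le_compat_l; [lra|].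
    rewrite <- Rinv_1. apply Rinv_le_contravar; lra.
Qed.

Lemma hq_le1 m : hq q m <= 1.
Proof. eapply Rle_trans; [apply hq_le_pow|apply pow_le1]. Qed.

Lemma qterm_S t m : (1 <= t)%nat -> qterm q (S t) m = qterm q t m * hq q m.
Proof.
  intros H. unfold qterm, hq. replace ((S t - 1) * m)%nat with ((t - 1) * m + m)%nat by nia.
  rewrite pow_add. simpl. unfold Rdiv. rewrite Rinv_mult.
  set (A := q ^ ((t-1)*m)). set (B := q ^ m). set (C := / qint q (INR m)). set (D := / qint q (INR m) ^ t). ring.
Qed.

Lemma qterm1 m : qterm q 1 m = (1 - q) / (1 - q ^ m).
Proof.
  unfold qterm. rewrite qint_eq. simpl. replace ((1-1)*m)%nat with 0%nat by lia. simpl.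
  destruct (Req_dec (1 - q^m) 0) as [E|E].
  - rewrite E. unfold Rdiv. rewrite Rmult_0_l, ?Rmult_1_r, ?Rmult_0_l, !Rinv_0, ?Rmult_0_l, ?Rmult_0_r. reflexivity.
  - field. split; lra.
Qed.
Lemma hq_eq m : hq q m = q ^ m * (1 - q) / (1 - q ^ m).
Proof.
  unfold hq. rewrite qint_eq.
  destruct (Req_dec (1 - q^m) 0) as [E|E].
  - rewrite E. unfold Rdiv. rewrite Rmult_0_l, ?Rmult_1_r, ?Rmult_0_l, !Rinv_0, ?Rmult_0_l, ?Rmult_0_r; try reflexivity; try ring.
  - field. split; lra.
Qed.

Lemma pow_lt1 m : (1 <= m)%nat -> q ^ m < 1.
Proof.
  intros H. destruct m; [lia|]. simpl. assert (q^m <= 1) by apply pow_le1.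
  assert (0 < q^m) by apply pow_pos'. nra.
Qed.

Lemma PF s a b : (1 <= s)%nat -> (1 <= b)%nat -> (b < a)%nat ->
  sm (fun k => qterm q (s - k) a * qterm q (k + 1) b) 0 (s - 1)
  = qterm q s b * (hq q (a - b) - hq q a) - qterm q s a * hq q (a - b).
Proof.
  intros Hs Hb Hab.
  assert (Ha : a = (b + (a - b))%nat) by lia.
  assert (Hu : q ^ a = q ^ b * q ^ (a - b)) by (rewrite Ha at 1; apply pow_add).
  assert (Hv : q ^ b < 1) by (apply pow_lt1; lia).
  assert (Hw : q ^ (a - b) < 1) by (apply pow_lt1; lia).
  assert (Hv0 : 0 < q ^ b) by apply pow_pos'.
  assert (Hw0 : 0 < q ^ (a - b)) by apply pow_pos'.
  assert (Hu1 : q ^ a < 1) by (apply pow_lt1; lia).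
  assert (Hvw : q ^ b * q ^ (a - b) < 1) by (rewrite <- Hu; lra).
  assert (K : hq q b * (hq q (a - b) - hq q a) = hq q a * (hq q (a - b) - hq q a + qterm q 1 a)).
  { rewrite !hq_eq, qterm1, Hu. field. repeat split; lra. }
  induction s as [|s IH]; [lia|].
  destruct s as [|s].
  - simpl. rewrite sm_0. rewrite !qterm1, !hq_eq, Hu. field. repeat split; lra.
  - replace (S (S s) - 1)%nat with (S s) by lia. rewrite sm_S_r.
    replace (S (S s) - (0 + s))%nat with 2%nat by lia. replace (0 + s + 1)%nat with (S s) by lia.
    rewrite (sm_ext _ (fun k => hq q a * (qterm q (S s - k) a * qterm q (k + 1) b))).
    2:{ intros i Hi. replace (S (S s) - i)%nat with (S (S s - i)) by lia. rewrite qterm_S by lia. ring. }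
    rewrite sm_scal. replace (S s - 1)%nat with s in IH by lia. rewrite IH by lia.
    rewrite (qterm_S (S s) b) by lia. rewrite (qterm_S (S s) a) by lia.
    rewrite (qterm_S 1 a) by lia.
    replace (qterm q (S s) b * hq q b * (hq q (a - b) - hq q a)) with
      (qterm q (S s) b * (hq q b * (hq q (a - b) - hq q a))) by ring.
    rewrite K. ring.
Qed.

End Q.

Fixpoint Q (q : R) (M : nat) (ts : list nat) (g : nat -> R) : R :=
  match ts with
  | [] => g M
  | t :: ts' => sm (fun k => qterm q t k * Q q (k - 1) ts' g) 1 M
  end.

Definition one : nat -> R := fun _ => 1.
Definition gT q m B := sm (fun b => hq q (m - b)) 0 (S B).
Definition T q N ts := match ts with [] => 0 | t :: ts' => sm (fun m => qterm q t m * Q q (m - 1) ts' (gT q m)) 1 N end.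
Definition E q N ts := match ts with [] => 0 | t :: ts' => Q q (N - 1) (ts' ++ [t]) (gT q N) end.

Section S3.
Variable q : R.

Lemma Z_Q M ts : qzeta_trunc q M ts = Q q M ts one.
Proof.
  revert M; induction ts; intros M; [reflexivity|]. simpl.
  unfold sm. f_equal. apply map_ext. intros. rewrite IHts. reflexivity.
Qed.

Lemma Q_ext M ts g g' : (forall B, (B <= M)%nat -> g B = g' B) -> Q q M ts g = Q q M ts g'.
Proof.
  revert M; induction ts; intros M H; simpl; [apply H; lia|].
  apply sm_ext. intros i Hi. rewrite (IHts (i-1)%nat); [reflexivity|]. intros; apply H; lia.
Qed.

Lemma Q_plus M ts g1 g2 : Q q M ts (fun B => g1 B + g2 B) = Q q M ts g1 + Q q M ts g2.
Proof.
  revert M; induction ts; intros M; simpl; [reflexivity|].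
  rewrite <- sm_plus. apply sm_ext. intros. rewrite IHts. ring.
Qed.
Lemma Q_scal M ts c g : Q q M ts (fun B => c * g B) = c * Q q M ts g.
Proof.
  revert M; induction ts; intros M; simpl; [reflexivity|].
  rewrite <- sm_scal. apply sm_ext. intros. rewrite IHts. ring.
Qed.
Lemma Q_zero M ts : Q q M ts (fun _ => 0) = 0.
Proof.
  rewrite (Q_ext M ts _ (fun B => 0 * 0)) by (intros; ring). rewrite Q_scal. ring.
Qed.
Lemma Q_minus M ts g1 g2 : Q q M ts (fun B => g1 B - g2 B) = Q q M ts g1 - Q q M ts g2.
Proof.
  rewrite (Q_ext M ts _ (fun B => g1 B + (-1) * g2 B)) by (intros; ring).
  rewrite Q_plus, Q_scal. ring.
Qed.
Lemma Q_sm M ts (G : nat -> nat -> R) a n :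
  Q q M ts (fun B => sm (fun j => G j B) a n) = sm (fun j => Q q M ts (G j)) a n.
Proof.
  revert a; induction n; intros a.
  - rewrite sm_0. apply Q_zero.
  - rewrite sm_S_l. rewrite <- IHn. rewrite <- Q_plus. apply Q_ext. intros. rewrite sm_S_l. reflexivity.
Qed.
Lemma Q_app M ts t g :
  Q q M (ts ++ [t]) g = Q q M ts (fun B => sm (fun k => qterm q t k * g (k - 1)%nat) 1 B).
Proof.
  revert M; induction ts; intros M; simpl; [reflexivity|].
  apply sm_ext. intros. rewrite IHts. reflexivity.
Qed.

Lemma tele_h b k d : (b <= k)%nat ->
  sm (fun m => hq q (m - b) - hq q m) (k + 1) d
  = sm (fun c => hq q (k - c) - hq q (k + d - c)) 0 b.
Proof.
  intros Hbk. induction d.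
  - rewrite sm_0. symmetry. rewrite <- (sm_zero 0 b). apply sm_ext. intros. replace (k+0)%nat with k by lia. ring.
  - rewrite sm_S_r, IHd.
    rewrite (sm_ext (fun c => hq q (k - c) - hq q (k + S d - c))
       (fun c => (hq q (k - c) - hq q (k + d - c)) +
                 ((fun c => hq q (k + S d - c)) (S c) - (fun c => hq q (k + S d - c)) c))).
    2:{ intros i Hi. simpl. replace (k + S d - S i)%nat with (k + d - i)%nat by lia. ring. }
    rewrite sm_plus, (sm_tele (fun c => hq q (k + S d - c))). simpl.
    replace (k + 1 + d - b)%nat with (k + S d - b)%nat by lia.
    replace (k + 1 + d)%nat with (k + S d - 0)%nat by lia. ring.
Qed.

End S3.

Section S4.
Variable q : R.
Hypothesis hq0 : 0 < q.
Hypothesis hq1 : q < 1.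

Lemma stepA s1 rest N : (1 <= s1)%nat ->
  sm (fun k => Q q N ((s1 - k)%nat :: rest ++ [(k + 1)%nat]) one) 0 (s1 - 1)
  = sm (fun m => Q q (m - 1) rest (fun B => sm (fun b =>
        qterm q s1 b * (hq q (m - b) - hq q m) - qterm q s1 m * hq q (m - b)) 1 B)) 1 N.
Proof.
  intros Hs. simpl. rewrite sm_swap. apply sm_ext. intros m Hm.
  transitivity (sm (fun k => Q q (m-1) rest (fun B => qterm q (s1-k) m * sm (fun b => qterm q (k+1) b * 1) 1 B)) 0 (s1-1)).
  { apply sm_ext; intros. rewrite Q_app, Q_scal. reflexivity. }
  rewrite <- Q_sm. apply Q_ext. intros B HB.
  rewrite (sm_ext _ (fun k => sm (fun b => qterm q (s1 - k) m * qterm q (k + 1) b) 1 B)).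
  2:{ intros. rewrite <- sm_scal. apply sm_ext. intros. ring. }
  rewrite sm_swap. apply sm_ext. intros b Hb. apply PF; auto; lia.
Qed.

Lemma key s1 rest N : (1 <= s1)%nat ->
  sm (fun k => Q q N ((s1 - k)%nat :: rest ++ [(k + 1)%nat]) one) 0 (s1 - 1)
  = Q q N (S s1 :: rest) one - T q N (s1 :: rest) + T q (N - 1) (rest ++ [s1]) - E q N (s1 :: rest).
Proof.
  intros Hs. rewrite stepA by auto.
  set (G1 := fun m B => sm (fun b => qterm q s1 b * (hq q (m - b) - hq q m)) 1 B).
  set (H1 := fun m B => sm (fun b => hq q (m - b)) 1 B).
  rewrite (sm_ext _ (fun m => Q q (m - 1) rest (G1 m) - qterm q s1 m * Q q (m - 1) rest (H1 m))).
  2:{ intros m Hm. rewrite <- Q_scal, <- Q_minus. apply Q_ext. intros B HB.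
      unfold G1, H1. rewrite <- sm_scal, <- sm_minus. apply sm_ext. intros. ring. }
  rewrite sm_minus.
  assert (HY : Q q N (S s1 :: rest) one - T q N (s1 :: rest) =
               - sm (fun m => qterm q s1 m * Q q (m - 1) rest (H1 m)) 1 N).
  { simpl.
    assert (sm (fun m => qterm q s1 m * Q q (m - 1) rest (gT q m)) 1 N =
      sm (fun m => qterm q (S s1) m * Q q (m - 1) rest one) 1 N +
      sm (fun m => qterm q s1 m * Q q (m - 1) rest (H1 m)) 1 N) as E1.
    { rewrite <- sm_plus. apply sm_ext. intros m Hm.
      rewrite (Q_ext q _ _ (gT q m) (fun B => hq q m * one B + H1 m B)).
      2:{ intros B HB. unfold gT, H1, one. rewrite sm_S_l. replace (m - 0)%nat with m by lia. ring. }
      rewrite Q_plus, Q_scal. rewrite qterm_S by auto. ring. }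
    rewrite E1. ring. }
  assert (HX : sm (fun m => Q q (m - 1) rest (G1 m)) 1 N = T q (N - 1) (rest ++ [s1]) - E q N (s1 :: rest)).
  { destruct rest as [|r rest'].
    - simpl. unfold G1.
      rewrite (sm_tri (fun m b => qterm q s1 b * (hq q (m - b) - hq q m))).
      rewrite <- sm_minus. apply sm_ext. intros b Hb.
      rewrite sm_scal. replace (N - b)%nat with (N - b)%nat by reflexivity.
      rewrite tele_h by lia. replace (b + (N - b))%nat with N by lia.
      simpl Q. unfold gT. replace (S (b - 1)) with b by lia.
      rewrite <- Rmult_minus_distr_l, <- sm_minus. reflexivity.
    - simpl. rewrite (sm_tri (fun m k => qterm q r k * Q q (k - 1) rest' (G1 m))).
      rewrite <- sm_minus. apply sm_ext. intros k Hk.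
      rewrite sm_scal, <- Q_sm, !Q_app, <- Rmult_minus_distr_l, <- Q_minus. f_equal.
      apply Q_ext. intros B HB. unfold G1.
      rewrite (sm_swap (fun m b => qterm q s1 b * (hq q (m - b) - hq q m))).
      rewrite <- sm_minus. apply sm_ext. intros b Hb.
      rewrite sm_scal, tele_h by lia. replace (k + (N - k))%nat with N by lia.
      unfold gT. replace (S (b - 1)) with b by lia.
      rewrite <- Rmult_minus_distr_l, <- sm_minus. reflexivity. }
  rewrite HX. lra.
Qed.

End S4.

Section S5.
Variable q : R.
Hypothesis hq0 : 0 < q.
Hypothesis hq1 : q < 1.

Lemma Q_nonneg M ts g : (forall B, (B <= M)%nat -> 0 <= g B) -> 0 <= Q q M ts g.
Proof.
  revert M; induction ts; intros M H; simpl; [apply H; lia|].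
  apply sm_nonneg. intros i Hi. apply Rmult_le_pos. apply qterm_nonneg; auto; lia.
  apply IHts. intros; apply H; lia.
Qed.

Lemma INR_pow_mono a b n : (a <= b)%nat -> INR a ^ n <= INR b ^ n.
Proof. intros. apply pow_incr. split; [apply pos_INR| apply le_INR; auto]. Qed.

Lemma B1 M ts g C : 0 <= C -> (forall B, (B <= M)%nat -> 0 <= g B <= C) ->
  Q q M ts g <= INR (M + 1) ^ length ts * C.
Proof.
  revert M; induction ts; intros M HC H; simpl; [rewrite Rmult_1_l; apply H; lia|].
  eapply Rle_trans.
  - apply (sm_bound _ _ _ (INR (M + 1) ^ length ts * C)).
    intros k Hk.
    assert (Hq := qterm_le1 q hq0 hq1 a k ltac:(lia)).
    assert (Hq0 := qterm_nonneg q hq0 hq1 a k ltac:(lia)).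
    assert (HQ : Q q (k - 1) ts g <= INR (k - 1 + 1) ^ length ts * C).
    { apply IHts; auto. intros; apply H; lia. }
    assert (HQ0 : 0 <= Q q (k - 1) ts g) by (apply Q_nonneg; intros; apply H; lia).
    assert (INR (k - 1 + 1) ^ length ts <= INR (M + 1) ^ length ts) by (apply INR_pow_mono; lia).
    assert (Q q (k - 1) ts g <= INR (M + 1) ^ length ts * C) by nra.
    nra.
  - assert (INR M <= INR (M + 1)) by (apply le_INR; lia).
    assert (0 <= INR (M + 1) ^ length ts) by (apply pow_le, pos_INR).
    assert (0 <= INR (M + 1) ^ length ts * C) by nra. nra.
Qed.

Lemma B2 M ts g G : Exists (fun x => (1 < x)%nat) ts -> 0 <= G ->
  (forall B, (B <= M)%nat -> 0 <= g B /\ g B * q ^ B <= G) ->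
  Q q M ts g <= INR (M + 1) ^ length ts * G.
Proof.
  revert M; induction ts as [|t ts IH]; intros M HE HG H; [inversion HE|].
  simpl.
  assert (Hfin : forall A, (forall k, (1 <= k <= M)%nat -> qterm q t k * Q q (k - 1) ts g <= A) ->
     0 <= A -> A <= INR (M + 1) ^ length ts * G ->
     sm (fun k => qterm q t k * Q q (k - 1) ts g) 1 M <= INR (M + 1) * (INR (M + 1) ^ length ts * G)).
  { intros A HA HA0 HAle. eapply Rle_trans.
    - apply (sm_bound _ _ _ A). intros; apply HA; lia.
    - assert (INR M <= INR (M + 1)) by (apply le_INR; lia).
      assert (0 <= INR M) by apply pos_INR. nra. }
  rewrite Rmult_assoc. apply Hfin with (A := INR (M + 1) ^ length ts * G).
  2:{ apply Rmult_le_pos; auto. apply pow_le, pos_INR. }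
  2:{ lra. }
  intros k Hk.
  assert (Hq0 := qterm_nonneg q hq0 hq1 t k ltac:(lia)).
  assert (HQ0 : 0 <= Q q (k - 1) ts g) by (apply Q_nonneg; intros; apply H; lia).
  assert (Hpm : INR (k - 1 + 1) ^ length ts <= INR (M + 1) ^ length ts) by (apply INR_pow_mono; lia).
  assert (Hp0 : 0 <= INR (k - 1 + 1) ^ length ts) by (apply pow_le, pos_INR).
  destruct (le_lt_dec 2 t) as [Ht|Ht].
  -
    assert (Hqk := qterm_le_q q hq0 hq1 t k ltac:(lia) Ht).
    set (C := G * (/ q) ^ (k - 1)).
    assert (HC0 : 0 <= C) by (unfold C; apply Rmult_le_pos; auto; apply pow_le; left; apply Rinv_0_lt_compat; lra).
    assert (HQ : Q q (k - 1) ts g <= INR (k - 1 + 1) ^ length ts * C).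
    { apply B1; auto. intros B HB. destruct (H B ltac:(lia)) as [H1 H2]. split; auto.
      unfold C. assert (0 < q ^ B) by (apply pow_lt; lra).
      assert (g B <= G * (/ q) ^ B).
      { rewrite <- Rinv_pow by lra. apply Rcomplements.Rle_div_r in H2; auto. }
      eapply Rle_trans; [apply H3|]. apply Rmult_le_compat_l; auto.
      apply Rle_pow; [rewrite <- Rinv_1; apply Rinv_le_contravar; lra|lia]. }
    assert (Hkey : q ^ k * C = q * G).
    { unfold C. replace k with (S (k - 1)) at 1 by lia. simpl. rewrite <- Rinv_pow by lra.
      field. apply pow_nonzero. lra. }
    assert (qterm q t k * Q q (k - 1) ts g <= q ^ k * (INR (k - 1 + 1) ^ length ts * C)).
    { apply Rmult_le_compat; auto. }
    assert (q ^ k * (INR (k - 1 + 1) ^ length ts * C) = INR (k - 1 + 1) ^ length ts * (q * G)).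
    { rewrite <- Hkey. ring. }
    assert (INR (k - 1 + 1) ^ length ts * (q * G) <= INR (M + 1) ^ length ts * G).
    { apply Rmult_le_compat; auto. apply Rmult_le_pos; lra. nra. }
    lra.
  - inversion HE as [? ? Hx|? ? Hx]; subst. lia.
    assert (HQ : Q q (k - 1) ts g <= INR (k - 1 + 1) ^ length ts * G).
    { apply IH; auto. intros; apply H; lia. }
    assert (Hq1 := qterm_le1 q hq0 hq1 t k ltac:(lia)).
    assert (0 <= INR (k - 1 + 1) ^ length ts * G) by (apply Rmult_le_pos; auto).
    assert (INR (k - 1 + 1) ^ length ts * G <= INR (M + 1) ^ length ts * G) by (apply Rmult_le_compat_r; auto).
    nra.
Qed.

End S5.

Section S6.
Variable q : R.
Hypothesis hq0 : 0 < q.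
Hypothesis hq1 : q < 1.

Lemma lim_ratio : is_lim_seq (fun n => INR (S (S n)) / INR (S n)) 1.
Proof.
  assert (H1 : is_lim_seq (fun n => / INR (S n)) 0).
  { assert (H := is_lim_seq_INR). apply is_lim_seq_incr_1 in H.
    apply is_lim_seq_inv in H; [|discriminate]. exact H. }
  apply (is_lim_seq_ext (fun n => 1 + / INR (S n))).
  { intros n. rewrite (S_INR (S n)). field. apply not_0_INR. lia. }
  replace (Finite 1) with (Finite (1 + 0)) by (f_equal; ring).
  apply is_lim_seq_plus'; auto. apply is_lim_seq_const.
Qed.

Lemma lim_ratio_pow K : is_lim_seq (fun n => (INR (S (S n)) / INR (S n)) ^ K) 1.
Proof.
  induction K.
  - simpl. apply is_lim_seq_const.
  - simpl. replace (Finite 1) with (Finite (1 * 1)) by (f_equal; ring).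
    apply is_lim_seq_mult'; auto. apply lim_ratio.
Qed.

Definition aK K N := INR (S N) ^ K * q ^ N.

Lemma aK_pos K N : 0 < aK K N.
Proof. unfold aK. apply Rmult_lt_0_compat; apply pow_lt; [apply lt_0_INR; lia|lra]. Qed.

Lemma ser K : ex_series (aK K).
Proof.
  apply (ex_series_ext (fun n => Rabs (aK K n))).
  { intros. apply Rabs_pos_eq. left; apply aK_pos. }
  apply ex_series_DAlembert with (k := q); auto.
  { intros n. apply Rgt_not_eq, aK_pos. }
  apply (is_lim_seq_ext (fun n => (INR (S (S n)) / INR (S n)) ^ K * q)).
  { intros n. rewrite Rabs_pos_eq.
    - unfold aK. unfold Rdiv. rewrite Rpow_mult_distr, pow_inv. simpl (q ^ S n).
      field. split; [apply pow_nonzero; lra|apply pow_nonzero, not_0_INR; lia].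
    - left. apply Rdiv_lt_0_compat; apply aK_pos. }
  replace (Finite q) with (Finite (1 * q)) by (f_equal; ring).
  apply is_lim_seq_mult'. apply lim_ratio_pow. apply is_lim_seq_const.
Qed.

Lemma lim_err K : is_lim_seq (fun N => INR (S N) ^ K * q ^ (S N)) 0.
Proof.
  apply (is_lim_seq_ext (fun N => q * aK K N)).
  { intros. unfold aK. simpl. ring. }
  replace (Finite 0) with (Rbar_mult q 0) by (simpl; f_equal; ring).
  apply is_lim_seq_scal_l. apply ex_series_lim_0, ser.
Qed.

Lemma ser_bound K : exists S, forall N, sum_f_R0 (aK K) N <= S.
Proof.
  destruct (ser K) as [l Hl]. exists l.
  apply is_series_Reals in Hl. apply is_lim_seq_Reals in Hl.
  apply is_lim_seq_incr_compare; auto.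
  intros n. simpl. assert (0 < aK K (S n)) by apply aK_pos. lra.
Qed.

Lemma Z_bound t ts : (2 <= t)%nat -> exists S, forall N, Q q N (t :: ts) one <= S.
Proof.
  intros Ht. destruct (ser_bound (length ts)) as [S HS]. exists (q * S). intros N.
  simpl. eapply Rle_trans.
  - apply (sm_le _ (fun k => q ^ k * INR k ^ length ts)). intros k Hk.
    assert (H1 := qterm_le_q q hq0 hq1 t k ltac:(lia) Ht).
    assert (H0 := qterm_nonneg q hq0 hq1 t k ltac:(lia)).
    assert (HQ : Q q (k - 1) ts one <= INR (k - 1 + 1) ^ length ts * 1).
    { apply B1; auto; [lra|]. intros; unfold one; lra. }
    replace (k - 1 + 1)%nat with k in HQ by lia.
    assert (HQ0 : 0 <= Q q (k - 1) ts one) by (apply Q_nonneg; auto; intros; unfold one; lra).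
    rewrite Rmult_1_r in HQ. apply Rmult_le_compat; auto.
  - rewrite sm_shift. rewrite (sm_ext _ (fun i => q * aK (length ts) i)).
    2:{ intros. unfold aK. simpl. ring. }
    rewrite sm_scal. apply Rmult_le_compat_l; [lra|].
    eapply Rle_trans; [|apply (HS N)]. rewrite <- sm_Reals. rewrite sm_S_r.
    assert (0 < aK (length ts) (0 + N)) by apply aK_pos. lra.
Qed.

Lemma conv t ts : (2 <= t)%nat -> is_lim_seq (fun M => Q q M (t :: ts) one) (qzeta q (t :: ts)).
Proof.
  intros Ht.
  assert (Hex : ex_finite_lim_seq (fun M => Q q M (t :: ts) one)).
  { destruct (Z_bound t ts Ht) as [S HS]. apply ex_finite_lim_seq_incr with (M := S); auto.
    intros n. simpl. rewrite sm_S_r.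
    assert (0 <= qterm q t (1 + n) * Q q (1 + n - 1) ts one).
    { apply Rmult_le_pos. apply qterm_nonneg; auto; lia. apply Q_nonneg; auto. intros; unfold one; lra. }
    lra. }
  destruct Hex as [l Hl].
  unfold qzeta. rewrite (Lim_seq_ext _ (fun M => Q q M (t :: ts) one)).
  2:{ intros. apply Z_Q. }
  rewrite (is_lim_seq_unique _ _ Hl). simpl. exact Hl.
Qed.

End S6.

Section S7.
Variable q : R.
Hypothesis hq0 : 0 < q.
Hypothesis hq1 : q < 1.

Lemma gT_bounds N' B : (B <= N')%nat ->
  0 <= gT q (S N') B <= INR (S N') /\ gT q (S N') B * q ^ B <= INR (S N') * q ^ (S N').
Proof.
  intros HB. unfold gT. split; [split|].
  - apply sm_nonneg. intros. apply hq_nonneg; auto.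
  - eapply Rle_trans. apply (sm_bound _ _ _ 1). intros. apply hq_le1; auto.
    rewrite Rmult_1_r. apply le_INR. lia.
  - rewrite Rmult_comm, <- sm_scal. eapply Rle_trans.
    apply (sm_bound _ _ _ (q ^ (S N'))).
    + intros b Hb. assert (H1 := hq_le_pow q hq0 hq1 (S N' - b)).
      assert (H2 : q ^ B <= q ^ b) by (apply pow_mono; auto; lia).
      assert (0 <= hq q (S N' - b)) by (apply hq_nonneg; auto).
      assert (0 < q ^ B) by (apply pow_lt; lra).
      assert (H4 : q ^ B * hq q (S N' - b) <= q ^ b * q ^ (S N' - b)) by (apply Rmult_le_compat; lra).
      rewrite <- pow_add in H4. replace (b + (S N' - b))%nat with (S N') in H4 by lia. exact H4.
    + apply Rmult_le_compat_r. left; apply pow_lt; lra. apply le_INR. lia.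
Qed.

Lemma T_diff t ts N' : T q (S N') (t :: ts) - T q N' (t :: ts) = qterm q t (S N') * Q q N' ts (gT q (S N')).
Proof.
  simpl. rewrite sm_S_r. replace (1 + N')%nat with (S N') by lia. replace (S N' - 1)%nat with N' by lia. ring.
Qed.

Lemma err_bound t ts N' : Exists (fun x => (1 < x)%nat) (t :: ts) ->
  0 <= (T q (S N') (t :: ts) - T q N' (t :: ts)) + E q (S N') (t :: ts)
  <= 2 * (INR (S N') ^ S (S (length ts)) * q ^ (S N')).
Proof.
  intros HE. rewrite T_diff. simpl E. replace (S N' - 1)%nat with N' by lia.
  set (N := S N'). set (L := length ts).
  assert (HN1 : 1 <= INR N) by (unfold N; rewrite S_INR; assert (0 <= INR N') by apply pos_INR; lra).
  assert (HqN : 0 < q ^ N) by (apply pow_lt; lra).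
  assert (Hg : forall B, (B <= N')%nat -> 0 <= gT q N B <= INR N /\ gT q N B * q ^ B <= INR N * q ^ N)
    by (intros; apply gT_bounds; auto).
  assert (HD0 : 0 <= qterm q t N * Q q N' ts (gT q N)).
  { apply Rmult_le_pos. apply qterm_nonneg; auto; unfold N; lia. apply Q_nonneg; auto. intros; apply Hg; auto. }
  assert (HE0 : 0 <= Q q N' (ts ++ [t]) (gT q N)) by (apply Q_nonneg; auto; intros; apply Hg; auto).
  assert (Hpow : forall k, (k <= S (S L))%nat -> INR N ^ k <= INR N ^ S (S L)).
  { intros. apply Rle_pow; auto. }
  replace (N' + 1)%nat with N in * by (unfold N; lia).
  assert (HEb : Q q N' (ts ++ [t]) (gT q N) <= INR N ^ S (S L) * q ^ N).
  { assert (HEx : Exists (fun x => (1 < x)%nat) (ts ++ [t])).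
    { apply Exists_app. inversion HE; subst; [right; constructor; auto| left; auto]. }
    assert (HG0 : 0 <= INR N * q ^ N) by (apply Rmult_le_pos; lra).
    eapply Rle_trans. apply (B2 q hq0 hq1 N' (ts ++ [t]) (gT q N) (INR N * q ^ N) HEx HG0).
    - intros B HB. split; [apply Hg; auto| apply Hg; auto].
    - replace (N' + 1)%nat with N by (unfold N; lia). rewrite length_app. simpl. fold L.
      replace (L + 1)%nat with (S L) by lia. simpl. right. ring. }
  assert (HDb : qterm q t N * Q q N' ts (gT q N) <= INR N ^ S (S L) * q ^ N).
  { destruct (le_lt_dec 2 t) as [Ht|Ht].
    - assert (H1 := qterm_le_q q hq0 hq1 t N ltac:(unfold N; lia) Ht).
      assert (HQ : Q q N' ts (gT q N) <= INR (N' + 1) ^ L * INR N).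
      { apply B1; auto. lra. intros; apply Hg; auto. }
      replace (N' + 1)%nat with N in HQ by (unfold N; lia).
      assert (INR N ^ L * INR N <= INR N ^ S (S L)).
      { replace (INR N ^ L * INR N) with (INR N ^ S L) by (simpl; ring). apply Rle_pow; auto. }
      assert (HQ0 : 0 <= Q q N' ts (gT q N)) by (apply Q_nonneg; auto; intros; apply Hg; auto).
      assert (qterm q t N * Q q N' ts (gT q N) <= q ^ N * (INR N ^ L * INR N)) by (apply Rmult_le_compat; auto; apply qterm_nonneg; auto; unfold N; lia).
      nra.
    - inversion HE; subst; [lia|].
      assert (HQ : Q q N' ts (gT q N) <= INR (N' + 1) ^ L * (INR N * q ^ N)).
      { apply B2; auto. apply Rmult_le_pos; lra. intros; split; apply Hg; auto. }
      replace (N' + 1)%nat with N in HQ by (unfold N; lia).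
      assert (H1 := qterm_le1 q hq0 hq1 t N ltac:(unfold N; lia)).
      assert (HQ0 : 0 <= Q q N' ts (gT q N)) by (apply Q_nonneg; auto; intros; apply Hg; auto).
      assert (INR N ^ L * INR N <= INR N ^ S (S L)).
      { replace (INR N ^ L * INR N) with (INR N ^ S L) by (simpl; ring). apply Rle_pow; auto. }
      assert (qterm q t N * Q q N' ts (gT q N) <= Q q N' ts (gT q N)) by nra.
      nra. }
  rewrite Nat.sub_0_r. split; lra.
Qed.

End S7.

Lemma sm_lim (u : nat -> nat -> R) (l : nat -> R) a n :
  (forall j, (a <= j < a + n)%nat -> is_lim_seq (u j) (l j)) ->
  is_lim_seq (fun N => sm (fun j => u j N) a n) (sm l a n).
Proof.
  revert a; induction n; intros a H.
  - apply (is_lim_seq_ext (fun _ => 0)). intros; reflexivity. apply is_lim_seq_const.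
  - apply (is_lim_seq_ext (fun N => u a N + sm (fun j => u j N) (S a) n)).
    { intros. rewrite sm_S_l. reflexivity. }
    rewrite sm_S_l. apply is_lim_seq_plus'. apply H; lia. apply IHn. intros; apply H; lia.
Qed.

Lemma sm_cyc (a : nat -> R) n : a n = a 0%nat -> sm (fun j => a (S j)) 0 n = sm a 0 n.
Proof.
  intros H. rewrite <- sm_shift.
  assert (sm a 0 (S n) = a 0%nat + sm a 1 n) by apply sm_S_l.
  rewrite sm_S_r in H0. simpl in H0. lra.
Qed.

Section Rot.
Variable s : list nat.
Let n := length s.
Hypothesis hn : (1 <= n)%nat.
Definition tlr j := map (fun m => nth ((j + m) mod n) s 0%nat) (seq 1 (n - 1)).
Definition R_ j := map (fun m => nth ((j + m) mod n) s 0%nat) (seq 0 n).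

Lemma rot_head j : (j < n)%nat -> R_ j = nth j s 0%nat :: tlr j.
Proof.
  intros Hj. unfold R_, tlr. assert (Hs : seq 0 n = 0%nat :: seq 1 (n - 1)).
  { replace n with (S (n - 1)) at 1 by lia. reflexivity. }
  rewrite Hs. cbn [map]. rewrite Nat.add_0_r, Nat.mod_small by lia. reflexivity.
Qed.

Lemma rot_next j : (j < n)%nat -> tlr j ++ [nth j s 0%nat] = R_ (S j).
Proof.
  intros Hj. unfold R_, tlr. set (n0 := (n - 1)%nat).
  assert (Hs : seq 0 n = seq 0 n0 ++ [n0]) by (rewrite <- seq_S; f_equal; unfold n0; lia).
  rewrite Hs, map_app. simpl.
  f_equal.
  - rewrite <- seq_shift, map_map. apply map_ext. intros m. f_equal. f_equal. lia.
  - replace (S (j + n0)) with (j + 1 * n)%nat by (unfold n0; lia). rewrite Nat.Div0.mod_add, Nat.mod_small by lia.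
    reflexivity.
Qed.

Lemma rot_n : R_ n = R_ 0.
Proof.
  unfold R_. apply map_ext. intros m. f_equal. replace (n + m)%nat with (m + 1 * n)%nat by lia.
  rewrite Nat.Div0.mod_add. reflexivity.
Qed.

Lemma rot_exists j : (j < n)%nat -> Exists (fun x => (1 < x)%nat) s -> Exists (fun x => (1 < x)%nat) (R_ j).
Proof.
  intros Hj HE. apply Exists_exists in HE. destruct HE as [x [Hx Hx1]].
  apply In_nth with (d := 0%nat) in Hx. destruct Hx as [i [Hi Hix]]. fold n in Hi.
  apply Exists_exists. exists x. split; auto. unfold R_. apply in_map_iff.
  destruct (le_lt_dec j i) as [Hji|Hji].
  - exists (i - j)%nat. split. replace (j + (i - j))%nat with i by lia. rewrite Nat.mod_small by lia. auto.
    apply in_seq. lia.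
  - exists (i + n - j)%nat. split. replace (j + (i + n - j))%nat with (i + 1 * n)%nat by lia.
    rewrite Nat.Div0.mod_add, Nat.mod_small by lia. auto. apply in_seq. lia.
Qed.

Lemma tlr_length j : length (tlr j) = (n - 1)%nat.
Proof. unfold tlr. rewrite length_map, length_seq. reflexivity. Qed.

End Rot.

Theorem theorem5p1 (q : R) (s : list nat)
  (hq0 : 0 < q) (hq1 : q < 1)
  (hn : (1 <= length s)%nat)
  (hpos : List.Forall (fun x => (1 <= x)%nat) s)
  (hbig : List.Exists (fun x => (1 < x)%nat) s) :
  let n := length s in
  let tl := fun j => map (fun m => nth ((j + m) mod n) s 0%nat) (seq 1 (n - 1)) in
  fsum n (fun j => qzeta q ((nth j s 0%nat + 1)%nat :: tl j))
  = fsum n (fun j =>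
      fsum (nth j s 0%nat - 1) (fun k =>
        qzeta q ((nth j s 0%nat - k)%nat :: tl j ++ [(k + 1)%nat]))).
Proof.
  intros n tl.
  change (sm (fun j => qzeta q ((nth j s 0%nat + 1)%nat :: tlr s j)) 0 (length s)
    = sm (fun j => sm (fun k => qzeta q ((nth j s 0%nat - k)%nat :: tlr s j ++ [(k + 1)%nat])) 0 (nth j s 0%nat - 1)) 0 (length s)).
  clear n tl. set (n := length s).
  assert (Hs1 : forall j, (j < n)%nat -> (1 <= nth j s 0)%nat).
  { intros j Hj. rewrite Forall_forall in hpos. apply hpos. apply nth_In. auto. }
  set (LHS := sm (fun j => qzeta q ((nth j s 0%nat + 1)%nat :: tlr s j)) 0 n).
  set (RHS := sm (fun j => sm (fun k => qzeta q ((nth j s 0%nat - k)%nat :: tlr s j ++ [(k + 1)%nat])) 0 (nth j s 0%nat - 1)) 0 n).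
  set (A := fun N => sm (fun j => Q q N ((nth j s 0 + 1)%nat :: tlr s j) one) 0 n).
  set (Bv := fun N => sm (fun j => sm (fun k => Q q N ((nth j s 0 - k)%nat :: tlr s j ++ [(k+1)%nat]) one) 0 (nth j s 0 - 1)%nat) 0 n).
  set (err := fun N' => sm (fun j => (T q (S N') (R_ s j) - T q N' (R_ s j)) + E q (S N') (R_ s j)) 0 n).
  assert (Hid : forall N', Bv (S N') = A (S N') - err N').
  { intros N'. unfold Bv, A, err.
    rewrite (sm_ext _ (fun j => (Q q (S N') ((nth j s 0 + 1)%nat :: tlr s j) one -
         ((T q (S N') (R_ s j) - T q N' (R_ s j)) + E q (S N') (R_ s j))) +
         (T q N' (R_ s (S j)) - T q N' (R_ s j)))).
    2:{ intros j Hj. rewrite key by (auto; apply Hs1; lia).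
        rewrite <- (rot_head s hn j) by (unfold n in Hj; lia).
        replace (S N' - 1)%nat with N' by lia. rewrite (rot_next s hn j) by (unfold n in Hj; lia).
        rewrite Nat.add_1_r. ring. }
    rewrite sm_plus, sm_minus, sm_minus.
    rewrite (sm_cyc (fun j => T q N' (R_ s j))). ring.
    unfold n. rewrite rot_n; auto. }
  assert (HA : is_lim_seq A LHS).
  { apply sm_lim. intros j Hj. apply conv; auto. assert (1 <= nth j s 0)%nat by (apply Hs1; lia). lia. }
  assert (HB : is_lim_seq Bv RHS).
  { apply sm_lim. intros j Hj. apply sm_lim. intros k Hk. apply conv; auto. lia. }
  assert (Herr : is_lim_seq err 0).
  { apply is_lim_seq_le_le with (u := fun _ => 0)
      (w := fun N' => INR n * (2 * (INR (S N') ^ S (S (n - 1)) * q ^ (S N')))).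
    - intros N'. unfold err. split.
      + apply sm_nonneg. intros j Hj. rewrite (rot_head s hn j) by (unfold n in Hj; lia).
        apply err_bound; auto. rewrite <- (rot_head s hn j) by (unfold n in Hj; lia).
        apply rot_exists; auto. unfold n in Hj; lia.
      + replace n with (0 + n)%nat at 1 by lia. apply sm_bound. intros j Hj.
        rewrite (rot_head s hn j) by (unfold n in Hj; lia).
        replace (n - 1)%nat with (length (tlr s j)) by (rewrite tlr_length; reflexivity). apply err_bound; auto. rewrite <- (rot_head s hn j) by (unfold n in Hj; lia).
        apply rot_exists; auto. unfold n in Hj; lia.
    - apply is_lim_seq_const.
    - replace (Finite 0) with (Rbar_mult (INR n) (Rbar_mult 2 0)) by (simpl; f_equal; ring).
      apply is_lim_seq_scal_l, is_lim_seq_scal_l. apply lim_err; auto. }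
  assert (Hd : is_lim_seq err (LHS - RHS)).
  { apply (is_lim_seq_ext (fun N' => A (S N') - Bv (S N'))).
    { intros. rewrite Hid. ring. }
    apply is_lim_seq_minus'; apply -> is_lim_seq_incr_1; auto. }
  apply is_lim_seq_unique in Herr. apply is_lim_seq_unique in Hd.
  rewrite Herr in Hd. injection Hd. intros. lra.
Qed.
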